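(* Let $n > 1$ be a square-free positive integer. Then $n$ is $\pi/4$-congruent if and only if $n$ is the square-free part of $rs(r^2+2rs-s^2)$ for some relatively prime positive integers $r,s$. Likewise, $n$ is $3\pi/4$-congruent if and only if $n$ is the square-free part of $rs(r^2-2rs-s^2)$ for some relatively prime positive integers $r,s$.
   Context: For $\theta \in \{\pi/4,3\pi/4\}$, a positive integer $n$ is $\theta$-congruent if there exist positive rationals $a,b,c$ such that the triangle with sides $a$, $b\sqrt2$, $c$ has angle $\theta$ opposite $c$ and area $n$; equivalently $ab = 2n$ and $c^2 = a^2+2b^2-2ab$ (for $\theta = \pi/4$), resp. $c^2 = a^2+2b^2+2ab$ (for $\theta=3\pi/4$). The square-free part of a non-zero integer $N$ is the unique square-free integer $n$ with $N/n$ a square of a rational number. *)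

(* Defs.v *)
From mathcomp Require Import all_boot all_order all_algebra.
Set Implicit Arguments. Unset Strict Implicit. Unset Printing Implicit Defensive.
Import Order.TTheory GRing.Theory Num.Theory.
Local Open Scope ring_scope.

(* A positive integer n is pi/4-congruent: there are positive rationals a,b,c
   with ab = 2n and c^2 = a^2 + 2b^2 - 2ab (triangle with sides a, b*sqrt2, c,
   angle pi/4 opposite c, area n). *)
Definition pi4_congruent (n : nat) : Prop :=
  exists a b c : rat, [/\ 0 < a, 0 < b, 0 < c,
    a * b = 2 * n%:R & c ^+ 2 = a ^+ 2 + 2 * b ^+ 2 - 2 * a * b].

Definition pi34_congruent (n : nat) : Prop :=
  exists a b c : rat, [/\ 0 < a, 0 < b, 0 < c,
    a * b = 2 * n%:R & c ^+ 2 = a ^+ 2 + 2 * b ^+ 2 + 2 * a * b].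

Definition sqfree_nat (n : nat) : bool :=
  (0 < n)%N && [forall d : 'I_n.+1, (1 < d)%N ==> ~~ (d * d %| n)%N].

Definition sqfree_int (m : int) : bool := sqfree_nat `|m|%N.

Definition is_sqfree_part (n N : int) : Prop :=
  N != 0 /\ sqfree_int n /\ exists q : rat, N%:~R / n%:~R = q ^+ 2.

(* Main.v *)
Require Import Defs.
From mathcomp Require Import all_boot all_order all_algebra.
Import Order.TTheory GRing.Theory Num.Theory.
Local Open Scope ring_scope.
From mathcomp Require Import ring lra.

Lemma bwd (e : rat) (n : nat) (r s q : rat) :
  (e = 1 \/ e = -1) -> (0 < n)%N -> 0 < r -> 0 < s ->
  r * s * (r ^+ 2 + 2 * e * r * s - s ^+ 2) != 0 ->
  r * s * (r ^+ 2 + 2 * e * r * s - s ^+ 2) / n%:R = q ^+ 2 ->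
  exists a b c : rat, [/\ 0 < a, 0 < b, 0 < c,
    a * b = 2 * n%:R & c ^+ 2 = a ^+ 2 + 2 * b ^+ 2 - 2 * e * a * b].
Proof.
move=> He n0 r0 s0.
set D := (r ^+ 2 + 2 * e * r * s - s ^+ 2) => N0 HN.
have nR : 0 < (n%:R : rat) by rewrite ltr0n.
have n0' : (n%:R : rat) != 0 by rewrite gt_eqF.
set q' := `|q|.
have Hq2 : q' ^+ 2 = r * s * D / n%:R by rewrite /q' real_normK ?num_real.
have q0 : q != 0.
  apply/eqP => q0; move: HN; rewrite q0 expr0n /= => /eqP.
  by rewrite mulf_eq0 invr_eq0 (negbTE N0) (negbTE n0').
have q'0 : 0 < q' by rewrite /q' normr_gt0.
have Np : 0 < r * s * D.
  have : 0 < q' ^+ 2 by apply: exprn_gt0.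
  by rewrite Hq2 => h; have := mulr_gt0 h nR; rewrite mulfVK.
have Dp : 0 < D by move: Np; rewrite pmulr_rgt0 //; apply: mulr_gt0.
have D0 : D != 0 by rewrite gt_eqF.
have r0' : r != 0 by rewrite gt_eqF.
have s0' : s != 0 by rewrite gt_eqF.
exists (n%:R * q' / (r * s)), (2 * n%:R * q' / D),
  (2 * n%:R * q' / D * (r ^+ 2 + s ^+ 2) / (2 * r * s)); split.
- by apply: divr_gt0; [apply: mulr_gt0|apply: mulr_gt0].
- by apply: divr_gt0 => //; apply: mulr_gt0 => //; apply: mulr_gt0.
- apply: divr_gt0; last by repeat (apply: mulr_gt0 => //).
  apply: mulr_gt0; last by apply: addr_gt0; apply: exprn_gt0.
  by apply: divr_gt0 => //; apply: mulr_gt0 => //; apply: mulr_gt0.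
- have -> : n%:R * q' / (r * s) * (2 * n%:R * q' / D) = 2 * n%:R ^+ 2 * q' ^+ 2 / (r * s * D).
    by field; rewrite D0 r0' s0'.
  by rewrite Hq2; field; rewrite D0 r0' s0' n0'.
- move: D0; rewrite /D; case: He => -> D0; field; rewrite ?D0 r0' s0' //.
Qed.

Lemma fwd (e : rat) (n : nat) (a b c : rat) :
  (e = 1 \/ e = -1) -> 0 < a -> 0 < b -> 0 < c ->
  a * b = 2 * n%:R -> c ^+ 2 = a ^+ 2 + 2 * b ^+ 2 - 2 * e * a * b ->
  exists r s : nat, [/\ (0 < r)%N, (0 < s)%N, coprime r s &
    exists q : rat,
      0 < r%:R * s%:R * (r%:R ^+ 2 + 2 * e * r%:R * s%:R - s%:R ^+ 2) /\
      r%:R * s%:R * (r%:R ^+ 2 + 2 * e * r%:R * s%:R - s%:R ^+ 2) / n%:R = q ^+ 2].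
Proof.
move=> He a0 b0 c0 Hab Hc.
have e2 : e ^+ 2 = 1 by case: He => ->; rewrite ?expr1n ?sqrrN ?expr1n.
set x := a - e * b.
have Hx : c ^+ 2 = x ^+ 2 + b ^+ 2.
  by rewrite Hc /x; case: He => ->; ring.
have xc : x < c by nra.
set l := (c - x) / b.
have l0 : 0 < l by apply: divr_gt0 => //; rewrite subr_gt0.
exists `|denq l|%N, `|numq l|%N.
have hn : (`|numq l|%N%:R : rat) = (numq l)%:~R.
  by rewrite natr_absz gtr0_norm // numq_gt0.
have hd : (`|denq l|%N%:R : rat) = (denq l)%:~R.
  by rewrite natr_absz gtr0_norm.
split.
- by rewrite absz_gt0 denq_neq0.
- by rewrite absz_gt0 numq_eq0 gt_eqF.
- by rewrite coprime_sym coprime_num_den.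
rewrite hn hd.
have lE := divq_num_den l.
have s0 : 0 < ((numq l)%:~R : rat) by rewrite ltr0z numq_gt0.
have r0 : 0 < ((denq l)%:~R : rat) by rewrite ltr0z denq_gt0.
move: ((numq l)%:~R : rat) ((denq l)%:~R : rat) lE s0 r0 => s r lE s0 r0.
have r0' : r != 0 by rewrite gt_eqF.
have s0' : s != 0 by rewrite gt_eqF.
have b0' : b != 0 by rewrite gt_eqF.
have a0' : a != 0 by rewrite gt_eqF.
have h1 : r * (c - x) = s * b.
  have hs : s = l * r by rewrite -lE divfK.
  by rewrite hs /l; field.
have h : (c - x) * (c + x) = b ^+ 2.
  by rewrite -subr_sqr Hx; ring.
have h2 : r * b = s * (c + x).
  apply: (mulIf b0'); transitivity (r * ((c - x) * (c + x))); first by rewrite h; ring.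
  by rewrite mulrA h1; ring.
have h3 : 2 * r * s * x = b * (r ^+ 2 - s ^+ 2).
  transitivity (r * (s * (c + x)) - s * (r * (c - x))); first by ring.
  by rewrite -h2 h1; ring.
set D := (r ^+ 2 + 2 * e * r * s - s ^+ 2).
have hD : b * D = 2 * r * s * a.
  transitivity (2 * r * s * x + 2 * e * r * s * b); last by rewrite /x; ring.
  by rewrite h3 /D; ring.
have n0 : (n%:R : rat) != 0.
  by apply/eqP => hn0; move: Hab; rewrite hn0 mulr0 => /eqP; rewrite mulf_eq0 (negbTE a0') (negbTE b0').
have Dp : 0 < D.
  have : 0 < b * D by rewrite hD; repeat (apply: mulr_gt0 => //).
  by rewrite pmulr_rgt0.
exists (b * D / (2 * n%:R)); split.
  by repeat (apply: mulr_gt0 => //).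
have Dv : D = 2 * r * s * a / b by rewrite -hD (mulrC b) mulfK.
have bv : b = 2 * n%:R / a by rewrite -Hab (mulrC a) mulfK.
rewrite Dv bv; field.
by rewrite n0 a0'.
Qed.

Lemma castN (e : int) (r s : nat) :
  ((r%:Z * s%:Z * (r%:Z ^+ 2 + 2 * e * r%:Z * s%:Z - s%:Z ^+ 2))%:~R : rat)
  = r%:R * s%:R * (r%:R ^+ 2 + 2 * e%:~R * r%:R * s%:R - s%:R ^+ 2).
Proof. rewrite !(rmorphM, rmorphD, rmorphB, rmorphXn, rmorphN) /=; ring. Qed.

Lemma main_gen (e : int) (n : nat) : (e = 1 \/ e = -1) -> sqfree_nat n ->
  ((exists a b c : rat, [/\ 0 < a, 0 < b, 0 < c,
    a * b = 2 * n%:R & c ^+ 2 = a ^+ 2 + 2 * b ^+ 2 - 2 * e%:~R * a * b]) <->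
  exists r s : nat, [/\ (0 < r)%N, (0 < s)%N, coprime r s &
       is_sqfree_part n%:Z
         (r%:Z * s%:Z * (r%:Z ^+ 2 + 2 * e * r%:Z * s%:Z - s%:Z ^+ 2))]).
Proof.
move=> He sqn.
have He' : (e%:~R : rat) = 1 \/ (e%:~R : rat) = -1 by case: He => ->; [left|right].
split.
- case=> a [b [c [a0 b0 c0 Hab Hc]]].
  have [r [s [r0 s0 cop [q [Np Hq]]]]] := @fwd _ n a b c He' a0 b0 c0 Hab Hc.
  exists r, s; split => //; split; last split => //.
  + by rewrite -(intr_eq0 rat) castN gt_eqF.
  + by exists q; rewrite castN.
- case=> r [s [r0 s0 cop [N0 [_ [q Hq]]]]].
  have n0 : (0 < n)%N by case/andP: sqn.
  have := @bwd _ n r%:R s%:R q He' n0.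
  rewrite !ltr0n => /(_ r0 s0); rewrite -castN intr_eq0 => /(_ N0).
  by move/(_ Hq).
Qed.

Theorem proposition5p1 (n : nat) :
  (1 < n)%N -> sqfree_nat n ->
  (pi4_congruent n <->
     exists r s : nat, [/\ (0 < r)%N, (0 < s)%N, coprime r s &
       is_sqfree_part n%:Z
         (r%:Z * s%:Z * (r%:Z ^+ 2 + 2 * r%:Z * s%:Z - s%:Z ^+ 2))])
  /\
  (pi34_congruent n <->
     exists r s : nat, [/\ (0 < r)%N, (0 < s)%N, coprime r s &
       is_sqfree_part n%:Z
         (r%:Z * s%:Z * (r%:Z ^+ 2 - 2 * r%:Z * s%:Z - s%:Z ^+ 2))]).
Proof.
  move=> n1 sqn; split.
  - have [h1 h2] := @main_gen 1 n (or_introl erefl) sqn.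
    split.
    + case=> a [b [c [a0 b0 c0 Hab Hc]]].
      case: h1; first by exists a, b, c; split => //; rewrite Hc rmorph1; ring.
      move=> r [s [r0 s0 cop H]]; exists r, s; split => //; move: H.
      try by have -> : (r%:Z ^+ 2 + 2 * 1 * r%:Z * s%:Z - s%:Z ^+ 2) = r%:Z ^+ 2 + 2 * r%:Z * s%:Z - s%:Z ^+ 2 by ring.
    + case=> r [s [r0 s0 cop H]].
      case: h2.
        exists r, s; split => //; move: H.
        try by have -> : (r%:Z ^+ 2 + 2 * 1 * r%:Z * s%:Z - s%:Z ^+ 2) = r%:Z ^+ 2 + 2 * r%:Z * s%:Z - s%:Z ^+ 2 by ring.
      move=> a [b [c [a0 b0 c0 Hab Hc]]].
      by exists a, b, c; split => //; rewrite Hc rmorph1; ring.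
  - have [h1 h2] := @main_gen (-1) n (or_intror erefl) sqn.
    split.
    + case=> a [b [c [a0 b0 c0 Hab Hc]]].
      case: h1; first by exists a, b, c; split => //; rewrite Hc rmorphN1; ring.
      move=> r [s [r0 s0 cop H]]; exists r, s; split => //; move: H.
      try by have -> : (r%:Z ^+ 2 + 2 * (-1) * r%:Z * s%:Z - s%:Z ^+ 2) = r%:Z ^+ 2 - 2 * r%:Z * s%:Z - s%:Z ^+ 2 by ring.
    + case=> r [s [r0 s0 cop H]].
      case: h2.
        exists r, s; split => //; move: H.
        try by have -> : (r%:Z ^+ 2 + 2 * (-1) * r%:Z * s%:Z - s%:Z ^+ 2) = r%:Z ^+ 2 - 2 * r%:Z * s%:Z - s%:Z ^+ 2 by ring.
      move=> a [b [c [a0 b0 c0 Hab Hc]]].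
      by exists a, b, c; split => //; rewrite Hc rmorphN1; ring.
Qed.
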